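(* Let $\beta>0$, $T>0$, $\lambda>0$, put $M=\beta T$, and let $B_M$ satisfy $0<B_M<\beta T$. Let $T_{\text{th}}=\dfrac{M}{\ln(1+M/\lambda)}$ and, for $x\ge 0$, $$P_{e|1}(x)=\sum_{y\in\mathbb{Z}_{\ge 0},\, y<T_{\text{th}}} e^{-(x+\lambda)}\frac{(x+\lambda)^y}{y!}.$$ Consider the optimization problem over real sequences $\{\Delta_i\}_{i=1}^\infty$: $$\min_{\{\Delta_i\}} \sum_{j=1}^{\infty}\frac{1}{2^{j}}P_{e|1}(M+\Delta_j)\quad\text{s.t.}\quad B_M-\sum_{j=1}^{i}\Delta_j\ge 0\ \text{ and }\ \sum_{j=1}^{i}\Delta_j\ge 0\ \text{ for all } i\ge 1.$$ Then for the optimal solution $\{\Delta^*_i\}_{i=1}^\infty$ there exists an index $J$ such that $\Delta^*_j=0$ for all $j>J$; that is, only finitely many of the optimal increments are positive.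
   Context: This is the ''no-ISI'' adaptive release-duration problem for a molecular transmitter with molecule production rate $\beta$, slot length $T$, storage capacity $B_M=\beta(T-T_M)$; $\Delta_i$ is the increment of the number of released molecules (for bit ''1'') in state $s_{i-1}$. $P_{e|1}(x)$ is the probability that a Poisson$(x+\lambda)$ count falls below the fixed threshold $T_{\text{th}}$. The paper assumes $M\gg\lambda$, so that $T_{\text{th}}<M$. *)

(* Defs.v *)
From Stdlib Require Import Reals Factorial.
From Coquelicot Require Import Coquelicot.
Open Scope R_scope.

Definition Tth (M lam : R) : R := M / ln (1 + M / lam).

Definition Pe1 (M lam x : R) : R :=
  Series (fun y : nat =>
    if Rlt_dec (INR y) (Tth M lam)
    then exp (- (x + lam)) * (x + lam) ^ y / INR (Factorial.fact y)
    else 0).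

(* Increments are indexed by i >= 1; Delta 0 is unused. *)
Definition feasible (BM : R) (Delta : nat -> R) : Prop :=
  forall i : nat, (1 <= i)%nat ->
    BM - sum_f_R0 (fun k => Delta (S k)) (i - 1) >= 0 /\
    sum_f_R0 (fun k => Delta (S k)) (i - 1) >= 0.

Definition objective (M lam : R) (Delta : nat -> R) : R :=
  Series (fun k : nat => / 2 ^ (S k) * Pe1 M lam (M + Delta (S k))).

Definition optimal (M lam BM : R) (Delta : nat -> R) : Prop :=
  feasible BM Delta /\
  forall Delta' : nat -> R, feasible BM Delta' ->
    objective M lam Delta <= objective M lam Delta'.

(* Main.v *)
Require Import Defs.
From Stdlib Require Import Reals Lra Lia Classical Factorial Wf_nat Arith.
From Coquelicot Require Import Coquelicot.
Open Scope R_scope.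

Lemma ln_le_sub1 y : 0 < y -> ln y <= y - 1.
Proof. intros. pose proof (exp_ineq1_le (ln y)). rewrite exp_ln in H0; lra. Qed.

Definition pk (K:nat) (mu:R) := exp (-mu) * mu ^ K / INR (fact K).
Definition Gk (K:nat) (mu:R) := sum_f_R0 (fun y => exp (-mu) * mu ^ y / INR (fact y)) K.

Lemma Gk_deriv K mu : is_derive (Gk K) mu (- pk K mu).
Proof.
  induction K.
  - unfold Gk, pk; simpl. auto_derive; auto. field.
  - apply is_derive_ext with (fun mu => Gk K mu + exp (-mu) * mu ^ (S K) / INR (fact (S K))).
    { intros t. unfold Gk. simpl. reflexivity. }
    replace (- pk (S K) mu) with (- pk K mu + (pk K mu - pk (S K) mu)) by ring.
    apply (@is_derive_plus R_AbsRing R_NormedModule (Gk K) (fun t => exp (-t) * t ^ S K / INR (fact (S K)))); auto.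
    auto_derive.
    all: try exact I.
    unfold pk.
    change (fact K + K * fact K)%nat with (fact (S K)).
    change (match K with | 0%nat => 1 | S _ => INR K + 1 end) with (INR (S K)).
    rewrite fact_simpl, mult_INR.
    assert (INR (fact K) <> 0) by (apply not_0_INR; apply fact_neq_0).
    assert (INR (S K) <> 0) by (apply not_0_INR; lia).
    simpl pow. field. split; auto.
Qed.

Lemma Gk_mvt K a b : a < b -> exists xi, a <= xi <= b /\ Gk K b - Gk K a = - pk K xi * (b - a).
Proof.
  intros Hab.
  destruct (MVT_gen (Gk K) a b (fun x => - pk K x)) as [c [Hc Heq]].
  - intros x _. apply Gk_deriv.
  - intros x _. apply derivable_continuous_pt. exists (- pk K x).
    apply is_derive_Reals, Gk_deriv.
  - rewrite Rmin_left in Hc by lra. rewrite Rmax_right in Hc by lra.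
    exists c. split; auto.
Qed.

Lemma pk_exp K mu : 0 < mu -> pk K mu = exp (- mu + INR K * ln mu) / INR (fact K).
Proof.
  intros H. unfold pk. rewrite <- (Rpower_pow K mu H). unfold Rpower.
  rewrite exp_plus. reflexivity.
Qed.

Lemma pk_pos K mu : 0 < mu -> 0 < pk K mu.
Proof.
  intros H. rewrite pk_exp by auto. apply Rdiv_lt_0_compat. apply exp_pos.
  apply lt_0_INR. apply lt_O_fact.
Qed.

Lemma pk_le_h K u v : 0 < u -> 0 < v -> - u + INR K * ln u <= - v + INR K * ln v -> pk K u <= pk K v.
Proof.
  intros Hu Hv H. rewrite !pk_exp by auto. unfold Rdiv.
  apply Rmult_le_compat_r. left; apply Rinv_0_lt_compat, lt_0_INR, lt_O_fact.
  destruct H as [H|H]. left; apply exp_increasing; auto. rewrite H; lra.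
Qed.

Lemma pk_decr K u v : 0 < u -> INR K <= u -> u <= v -> pk K v <= pk K u.
Proof.
  intros Hu HK Huv. apply pk_le_h; try lra.
  assert (Hl : ln v - ln u <= (v - u) / u).
  { rewrite <- ln_div by lra. eapply Rle_trans. apply ln_le_sub1.
    apply Rdiv_lt_0_compat; lra. right; field; lra. }
  assert (HK0 : 0 <= INR K) by apply pos_INR.
  assert (INR K * (ln v - ln u) <= INR K * ((v - u) / u)) by (apply Rmult_le_compat_l; auto).
  assert (INR K * ((v - u) / u) <= v - u).
  { unfold Rdiv. replace (INR K * ((v - u) * / u)) with ((v-u) * (INR K / u)) by (field; lra).
    rewrite <- (Rmult_1_r (v - u)) at 2. apply Rmult_le_compat_l. lra.
    apply Rmult_le_reg_r with u; auto. unfold Rdiv; rewrite Rmult_assoc, Rinv_l; lra. }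
  lra.
Qed.

Lemma pk_incr K u v : 0 < u -> u <= v -> v <= INR K -> pk K u <= pk K v.
Proof.
  intros Hu Huv HK. apply pk_le_h; try lra.
  assert (Hl : ln u - ln v <= (u - v) / v).
  { rewrite <- ln_div by lra. eapply Rle_trans. apply ln_le_sub1.
    apply Rdiv_lt_0_compat; lra. right; field; lra. }
  assert (INR K * ((v - u) / v) <= INR K * (ln v - ln u)).
  { apply Rmult_le_compat_l. apply pos_INR.
    replace ((v-u)/v) with (- ((u-v)/v)) by (field; lra). lra. }
  assert (v - u <= INR K * ((v - u) / v)).
  { replace (INR K * ((v - u) / v)) with ((v-u) * (INR K / v)) by (field; lra).
    rewrite <- (Rmult_1_r (v - u)) at 1. apply Rmult_le_compat_l. lra.
    apply Rmult_le_reg_r with v; try lra. unfold Rdiv; rewrite Rmult_assoc, Rinv_l; lra. }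
  lra.
Qed.

Lemma pk_unimodal K a x b : 0 < a -> a <= x -> x <= b -> Rmin (pk K a) (pk K b) <= pk K x.
Proof.
  intros Ha Hax Hxb. destruct (Rle_dec (INR K) x).
  - eapply Rle_trans. apply Rmin_r. apply pk_decr; lra.
  - eapply Rle_trans. apply Rmin_l. apply pk_incr; lra.
Qed.

Lemma pk_bounded K mu : 0 < mu -> pk K mu <= pk K (INR K) + 1.
Proof.
  intros H. destruct K as [|K'].
  - unfold pk. simpl. assert (exp (- mu) < 1). { rewrite <- exp_0. apply exp_increasing. lra. }
    assert (0 <= exp (-0) * 1 / 1). { rewrite Ropp_0, exp_0. lra. } lra.
  - assert (0 < INR (S K')) by (apply lt_0_INR; lia).
    assert (0 < pk (S K') (INR (S K'))) by (apply pk_pos; auto).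
    destruct (Rle_dec (INR (S K')) mu).
    + pose proof (pk_decr (S K') (INR (S K')) mu H0 (Rle_refl _) r). lra.
    + pose proof (pk_incr (S K') mu (INR (S K')) H ltac:(lra) (Rle_refl _)). lra.
Qed.

Lemma sum_stable (a : nat -> R) N : (forall n, (N < n)%nat -> a n = 0) ->
  forall n, (N <= n)%nat -> sum_f_R0 a n = sum_f_R0 a N.
Proof.
  intros Ha. induction n as [|n IH]; intros H.
  - replace N with 0%nat by lia. reflexivity.
  - destruct (Nat.eq_dec N (S n)). subst; reflexivity.
    simpl. rewrite IH by lia. rewrite (Ha (S n)) by lia. ring.
Qed.

Lemma series_fin (a : nat -> R) N : (forall n, (N < n)%nat -> a n = 0) -> Series a = sum_f_R0 a N.
Proof.
  intros Ha. apply is_series_unique. apply is_series_Reals.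
  intros eps He. exists N. intros n Hn. rewrite (sum_stable a N Ha n) by lia.
  unfold R_dist. rewrite Rminus_diag, Rabs_R0. auto.
Qed.

Lemma exists_K t : 0 < t -> exists K, forall y, INR y < t <-> (y <= K)%nat.
Proof.
  intros Ht. destruct (nfloor_ex t ltac:(lra)) as [n [H1 H2]].
  destruct H1 as [H1|H1].
  - exists n. intros y; split; intros Hy.
    + rewrite <- S_INR in H2. assert (INR y < INR (S n)) by lra.
      apply INR_lt in H. lia.
    + apply le_INR in Hy. lra.
  - exists (n - 1)%nat. assert (n <> 0%nat). { intro Hn0; rewrite Hn0 in H1; simpl in H1. lra. }
    intros y; split; intros Hy.
    + rewrite <- H1 in Hy. apply INR_lt in Hy. lia.
    + assert (y < n)%nat by lia. apply lt_INR in H0. lra.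
Qed.

Lemma Pe1_eq M lam x K : (forall y, INR y < Tth M lam <-> (y <= K)%nat) ->
  Pe1 M lam x = Gk K (x + lam).
Proof.
  intros HK. unfold Pe1. rewrite (series_fin _ K).
  - apply sum_eq. intros i Hi. destruct (Rlt_dec (INR i) (Tth M lam)). reflexivity.
    exfalso. apply n. apply HK; auto.
  - intros n Hn. destruct (Rlt_dec (INR n) (Tth M lam)); auto.
    apply HK in r. lia.
Qed.

Lemma Gk_nonneg K mu : 0 <= mu -> 0 <= Gk K mu.
Proof.
  intros H. unfold Gk. apply cond_pos_sum. intros n.
  apply Rmult_le_pos. apply Rmult_le_pos. left; apply exp_pos. apply pow_le; auto.
  left; apply Rinv_0_lt_compat, lt_0_INR, lt_O_fact.
Qed.

Lemma Gk_le K mu b : 0 <= mu -> mu <= b -> Gk K mu <= sum_f_R0 (fun y => b ^ y / INR (fact y)) K.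
Proof.
  intros H Hb. unfold Gk. apply sum_Rle. intros n _.
  unfold Rdiv. rewrite Rmult_assoc. rewrite <- (Rmult_1_l (b ^ n * _)).
  apply Rmult_le_compat.
  - left; apply exp_pos.
  - apply Rmult_le_pos. apply pow_le; auto. left; apply Rinv_0_lt_compat, lt_0_INR, lt_O_fact.
  - rewrite <- exp_0. destruct (Req_dec mu 0). subst; rewrite Ropp_0; lra. left; apply exp_increasing; lra.
  - apply Rmult_le_compat_r. left; apply Rinv_0_lt_compat, lt_0_INR, lt_O_fact.
    apply pow_incr; lra.
Qed.

Fixpoint Sp (D : nat -> R) (i : nat) : R :=
  match i with O => 0 | S i' => Sp D i' + D (S i') end.

Lemma sum_Sp D i : sum_f_R0 (fun k => D (S k)) i = Sp D (S i).
Proof. induction i; simpl. ring. rewrite IHi. simpl. ring. Qed.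

Lemma feas_Sp BM D : 0 <= BM -> feasible BM D -> forall i, 0 <= Sp D i <= BM.
Proof.
  intros HB HF i. destruct i. simpl; lra.
  specialize (HF (S i) ltac:(lia)). replace (S i - 1)%nat with i in HF by lia.
  rewrite sum_Sp in HF. lra.
Qed.

Lemma Sp_feas BM D : (forall i, 0 <= Sp D i <= BM) -> feasible BM D.
Proof.
  intros H i Hi. rewrite sum_Sp. replace (S (i-1)) with i by lia. specialize (H i). lra.
Qed.

Definition pert (D : nat -> R) k m eps i :=
  if Nat.eqb i k then D i + eps else if Nat.eqb i m then D i - eps else D i.

Lemma Sp_pert D k m eps : (1 <= k)%nat -> (k < m)%nat -> forall i,
  Sp (pert D k m eps) i = Sp D i + (if andb (Nat.leb k i) (Nat.ltb i m) then eps else 0).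
Proof.
  intros H1 H2. induction i.
  - simpl. destruct (Nat.leb_spec k 0); simpl; try lia. ring.
  - simpl. rewrite IHi. unfold pert.
    destruct (Nat.eqb_spec (S i) k), (Nat.eqb_spec (S i) m), (Nat.leb_spec k i),
      (Nat.ltb_spec i m), (Nat.leb_spec k (S i)), (Nat.ltb_spec (S i) m); simpl; try lia; lra.
Qed.

Lemma sum_single j A p : sum_f_R0 (fun n => if Nat.eqb n j then A else 0) p =
  if Nat.leb j p then A else 0.
Proof.
  induction p as [|p IHp]; cbn -[Nat.eqb Nat.leb].
  - destruct (Nat.eqb_spec 0 j), (Nat.leb_spec j 0); try lia; auto.
  - rewrite IHp. destruct (Nat.eqb_spec (S p) j), (Nat.leb_spec j p), (Nat.leb_spec j (S p)); try lia; lra.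
Qed.

Lemma Gk_bounds K M lam BM d : 0 < lam -> 0 <= BM -> BM < M -> -BM <= d <= BM ->
  0 <= Gk K (M + d + lam) <= sum_f_R0 (fun y => (M + BM + lam) ^ y / INR (fact y)) K.
Proof.
  intros. split. apply Gk_nonneg; lra. apply Gk_le; lra.
Qed.

Lemma D_Sp D i : D (S i) = Sp D (S i) - Sp D i.
Proof. simpl. ring. Qed.

Lemma obj_ex M lam BM D K : 0 < lam -> 0 <= BM -> BM < M ->
  (forall y, INR y < Tth M lam <-> (y <= K)%nat) -> feasible BM D ->
  ex_series (fun n => / 2 ^ S n * Pe1 M lam (M + D (S n))).
Proof.
  intros Hl HB HBM HK HF.
  pose proof (feas_Sp BM D HB HF) as HS.
  set (Bd := sum_f_R0 (fun y => (M + BM + lam) ^ y / INR (fact y)) K).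
  apply (@ex_series_le R_AbsRing R_CompleteNormedModule _ (fun n => (/2) ^ n * Bd)).
  - intros n. rewrite (Pe1_eq M lam _ K HK).
    assert (Hd : -BM <= D (S n) <= BM). { rewrite D_Sp. pose proof (HS n); pose proof (HS (S n)). lra. }
    pose proof (Gk_bounds K M lam BM (D (S n)) Hl HB HBM Hd) as [G0 G1]. fold Bd in G1.
    change (norm (/ 2 ^ S n * Gk K (M + D (S n) + lam))) with (Rabs (/ 2 ^ S n * Gk K (M + D (S n) + lam))).
    assert (0 < / 2 ^ S n) by (apply Rinv_0_lt_compat, pow_lt; lra).
    rewrite Rabs_pos_eq by (apply Rmult_le_pos; lra).
    rewrite pow_inv. apply Rmult_le_compat; try lra.
    apply Rinv_le_contravar. apply pow_lt; lra. simpl. pose proof (pow_lt 2 n ltac:(lra)). lra.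
  - apply ex_series_scal_r. exists (/ (1 - /2)). apply is_series_geom. rewrite Rabs_pos_eq; lra.
Qed.

Lemma obj_pert M lam BM D K k m eps : 0 < lam -> 0 <= BM -> BM < M ->
  (forall y, INR y < Tth M lam <-> (y <= K)%nat) -> feasible BM D ->
  feasible BM (pert D k m eps) -> (1 <= k)%nat -> (k < m)%nat ->
  objective M lam (pert D k m eps) - objective M lam D =
    / 2 ^ k * (Pe1 M lam (M + (D k + eps)) - Pe1 M lam (M + D k)) +
    / 2 ^ m * (Pe1 M lam (M + (D m - eps)) - Pe1 M lam (M + D m)).
Proof.
  intros Hl HB HBM HK HF HF' Hk Hkm. unfold objective.
  rewrite <- Series_minus by (eapply obj_ex; eauto).
  set (A := / 2 ^ k * (Pe1 M lam (M + (D k + eps)) - Pe1 M lam (M + D k))).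
  set (B := / 2 ^ m * (Pe1 M lam (M + (D m - eps)) - Pe1 M lam (M + D m))).
  rewrite (Series_ext _ (fun n => (if Nat.eqb n (k-1) then A else 0) + (if Nat.eqb n (m-1) then B else 0))).
  - rewrite (series_fin _ (m-1)).
    + rewrite sum_plus, !sum_single.
      destruct (Nat.leb_spec (k-1) (m-1)), (Nat.leb_spec (m-1) (m-1)); try lia. ring.
    + intros n Hn. destruct (Nat.eqb_spec n (k-1)), (Nat.eqb_spec n (m-1)); try lia. ring.
  - intros n. unfold pert.
    destruct (Nat.eqb_spec (S n) k), (Nat.eqb_spec (S n) m), (Nat.eqb_spec n (k-1)),
      (Nat.eqb_spec n (m-1)); try lia.
    + unfold A. rewrite e. ring.
    + unfold B. rewrite e. ring.
    + ring.
Qed.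

Lemma min_nat (P : nat -> Prop) n : P n -> exists m, P m /\ forall k, (k < m)%nat -> ~ P k.
Proof.
  induction n as [n IH] using lt_wf_ind. intros Hn.
  destruct (classic (exists k, (k < n)%nat /\ P k)) as [[k [Hk Pk]]|Hno].
  - apply (IH k Hk Pk).
  - exists n. split; auto. intros k Hk Pk. apply Hno. eauto.
Qed.

Lemma fin_min (f : nat -> R) a n : (forall i, (a <= i < n)%nat -> 0 < f i) ->
  exists e, 0 < e /\ forall i, (a <= i < n)%nat -> e <= f i.
Proof.
  induction n; intros H.
  - exists 1. split. lra. intros; lia.
  - destruct IHn as [e [He Hi]]. { intros; apply H; lia. }
    destruct (le_lt_dec a n).
    + exists (Rmin e (f n)). split. { apply Rmin_pos; auto. }
      intros i Hi'. destruct (Nat.eq_dec i n). subst; apply Rmin_r.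
      eapply Rle_trans. apply Rmin_l. apply Hi; lia.
    + exists e. split; auto. intros; apply Hi; lia.
Qed.

Lemma INR_lt_pow2 n : INR n < 2 ^ n.
Proof.
  induction n. simpl; lra. rewrite S_INR. simpl. pose proof (pow_R1_Rle 2 n ltac:(lra)) as H.
  lra.
Qed.

Theorem lemma2 (beta T lam BM : R) (Delta : nat -> R) :
  0 < beta -> 0 < T -> 0 < lam ->
  0 < BM -> BM < beta * T ->
  optimal (beta * T) lam BM Delta ->
  exists J : nat, forall j : nat, (J < j)%nat -> Delta j = 0.
Proof.
  intros Hb HT Hl HB0 HBM [HF Hopt].
  set (M := beta * T) in *.
  assert (HM : 0 < M) by (apply Rmult_lt_0_compat; auto).
  assert (HMl : 0 < M / lam) by (apply Rdiv_lt_0_compat; auto).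
  set (Lg := ln (1 + M / lam)).
  assert (HLg : 0 < Lg). { unfold Lg. rewrite <- ln_1. apply ln_increasing; lra. }
  assert (HTth : 0 < Tth M lam) by (unfold Tth; apply Rdiv_lt_0_compat; auto).
  destruct (exists_K _ HTth) as [K HK].
  assert (HKT : INR K < Tth M lam) by (apply HK; lia).
  assert (HKLg : INR K * Lg < M).
  { unfold Tth in HKT. fold Lg in HKT. apply Rmult_lt_compat_r with (r:=Lg) in HKT; auto.
    unfold Rdiv in HKT. rewrite Rmult_assoc, Rinv_l in HKT; lra. }
  set (mu0 := M + lam).
  assert (Hmu0 : ln mu0 = ln lam + Lg).
  { unfold Lg. rewrite <- ln_mult by lra. f_equal. unfold mu0. field. lra. }
  assert (HLg2 : M <= mu0 * Lg).
  { pose proof (ln_le_sub1 (/ (1 + M/lam)) ltac:(apply Rinv_0_lt_compat; lra)) as H.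
    rewrite ln_Rinv in H by lra. fold Lg in H.
    replace (/ (1 + M / lam)) with (lam / mu0) in H by (unfold mu0; field; lra).
    assert (Hm : 0 < mu0) by (unfold mu0; lra).
    assert (M / mu0 <= Lg). { replace (M / mu0) with (1 - lam / mu0) by (unfold mu0; field; lra). lra. }
    apply Rmult_le_compat_l with (r := mu0) in H0; [|lra].
    replace (mu0 * (M / mu0)) with M in H0 by (field; lra). lra. }
  assert (HKmu : INR K <= mu0).
  { assert (INR K * Lg < mu0 * Lg) by lra.
    apply Rmult_lt_reg_r in H; auto. lra. }
  assert (F4 : pk K mu0 <= pk K lam).
  { apply pk_le_h; try (unfold mu0; lra). rewrite Hmu0.
    assert (INR K * (ln lam + Lg) = INR K * ln lam + INR K * Lg) by ring. unfold mu0 in *. lra. }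
  assert (F5 : forall x, lam <= x <= mu0 -> pk K mu0 <= pk K x).
  { intros x Hx. pose proof (pk_unimodal K lam x mu0 Hl ltac:(lra) ltac:(lra)).
    rewrite Rmin_right in H; auto. }
  assert (Pdec : forall x, mu0 <= x -> pk K x <= pk K mu0).
  { intros x Hx. apply pk_decr; unfold mu0 in *; lra. }
  assert (Hpmu0 : 0 < pk K mu0) by (apply pk_pos; unfold mu0; lra).
  set (c := Rmin (pk K lam) (pk K (mu0 + BM))).
  assert (Hc : 0 < c). { apply Rmin_pos; apply pk_pos; unfold mu0; lra. }
  set (L := pk K (INR K) + 1).
  assert (HL : forall x, 0 < x -> pk K x <= L) by (intros; apply pk_bounded; auto).
  pose proof (feas_Sp BM Delta ltac:(lra) HF) as HS.
  assert (Hd : forall i, (1 <= i)%nat -> Delta i = Sp Delta i - Sp Delta (i - 1) /\ -BM <= Delta i <= BM).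
  { intros i Hi. destruct i. lia. replace (S i - 1)%nat with i by lia. rewrite D_Sp.
    pose proof (HS i); pose proof (HS (S i)). split; [reflexivity|lra]. }
  assert (Hpert : forall k m eps, (1 <= k)%nat -> (k < m)%nat -> 0 < eps ->
     (forall i, (k <= i < m)%nat -> Sp Delta i + eps <= BM) ->
     0 <= / 2 ^ k * (Gk K (mu0 + Delta k + eps) - Gk K (mu0 + Delta k)) +
          / 2 ^ m * (Gk K (mu0 + Delta m - eps) - Gk K (mu0 + Delta m))).
  { intros k m eps Hk Hkm He Hi.
    assert (HF' : feasible BM (pert Delta k m eps)).
    { apply Sp_feas. intros i. rewrite Sp_pert by auto.
      destruct (Nat.leb_spec k i), (Nat.ltb_spec i m); simpl; pose proof (HS i); try lra.
      pose proof (Hi i ltac:(lia)). lra. }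
    pose proof (obj_pert M lam BM Delta K k m eps Hl ltac:(lra) HBM HK HF HF' Hk Hkm) as E.
    pose proof (Hopt _ HF') as O.
    rewrite !(Pe1_eq M lam _ K HK) in E.
    replace (M + (Delta k + eps) + lam) with (mu0 + Delta k + eps) in E by (unfold mu0; ring).
    replace (M + Delta k + lam) with (mu0 + Delta k) in E by (unfold mu0; ring).
    replace (M + (Delta m - eps) + lam) with (mu0 + Delta m - eps) in E by (unfold mu0; ring).
    replace (M + Delta m + lam) with (mu0 + Delta m) in E by (unfold mu0; ring).
    lra. }
  assert (HD0 : exists D0, L / c < 2 ^ D0).
  { destruct (nfloor_ex (Rabs (L / c)) (Rabs_pos _)) as [n [_ Hn]].
    exists (S n). pose proof (INR_lt_pow2 (S n)). rewrite S_INR in H.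
    pose proof (Rle_abs (L / c)). lra. }
  destruct HD0 as [D0 HD0].
  assert (Far : forall k, (1 <= k)%nat -> (forall i, (k <= i < k + S D0)%nat -> Sp Delta i < BM) -> False).
  { intros k Hk Hlt. set (m := (k + S D0)%nat).
    destruct (fin_min (fun i => BM - Sp Delta i) k m) as [e0 [He0 Hie]].
    { intros i Hi. pose proof (Hlt i Hi). lra. }
    set (eps := Rmin e0 lam).
    assert (Heps : 0 < eps) by (apply Rmin_pos; lra).
    assert (Hepsl : eps <= lam) by apply Rmin_r.
    assert (Hie' : forall i, (k <= i < m)%nat -> Sp Delta i + eps <= BM).
    { intros i Hi. pose proof (Hie i Hi). pose proof (Rmin_l e0 lam). simpl in H. fold eps in H0. lra. }
    pose proof (Hpert k m eps Hk ltac:(unfold m; lia) Heps Hie') as P.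
    destruct (Hd k Hk) as [Dk Dkr]. destruct (Hd m ltac:(unfold m; lia)) as [Dm Dmr].
    assert (Hk2 : Delta k + eps <= BM).
    { pose proof (Hie' k ltac:(unfold m; lia)). pose proof (HS (k-1)%nat). lra. }
    destruct (Gk_mvt K (mu0 + Delta k) (mu0 + Delta k + eps) ltac:(lra)) as [x1 [Hx1 E1]].
    destruct (Gk_mvt K (mu0 + Delta m - eps) (mu0 + Delta m) ltac:(lra)) as [x2 [Hx2 E2]].
    assert (P1 : c <= pk K x1).
    { apply pk_unimodal; unfold mu0 in *; lra. }
    assert (P2 : pk K x2 <= L) by (apply HL; unfold mu0 in *; lra).
    assert (Hw : / 2 ^ m = / 2 ^ k * / 2 ^ S D0).
    { unfold m. rewrite pow_add. rewrite Rinv_mult. reflexivity. }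
    assert (Hwk : 0 < / 2 ^ k) by (apply Rinv_0_lt_compat, pow_lt; lra).
    assert (HW : 0 < 2 ^ S D0) by (apply pow_lt; lra).
    assert (HW2 : 2 ^ D0 < 2 ^ S D0) by (simpl; pose proof (pow_lt 2 D0 ltac:(lra)); lra).
    replace (Gk K (mu0 + Delta k + eps) - Gk K (mu0 + Delta k)) with (- pk K x1 * eps) in P by (rewrite E1; ring).
    replace (Gk K (mu0 + Delta m - eps) - Gk K (mu0 + Delta m)) with (pk K x2 * eps) in P
      by (replace (Gk K (mu0 + Delta m - eps) - Gk K (mu0 + Delta m)) with (- (Gk K (mu0 + Delta m) - Gk K (mu0 + Delta m - eps))) by ring; rewrite E2; ring).
    rewrite Hw in P.
    assert (Q : pk K x1 <= pk K x2 * / 2 ^ S D0).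
    { assert (0 <= / 2 ^ k * eps * (pk K x2 * / 2 ^ S D0 - pk K x1)) by nra.
      assert (0 < / 2 ^ k * eps) by nra.
      destruct (Rle_dec (pk K x1) (pk K x2 * / 2 ^ S D0)); auto. exfalso. nra. }
    assert (c * 2 ^ S D0 <= L).
    { assert (pk K x2 * / 2 ^ S D0 <= L * / 2 ^ S D0).
      { apply Rmult_le_compat_r; auto. left; apply Rinv_0_lt_compat; auto. }
      assert (c <= L * / 2 ^ S D0) by lra.
      apply Rmult_le_compat_r with (r := 2 ^ S D0) in H0; [|lra].
      rewrite Rmult_assoc, Rinv_l in H0; lra. }
    assert (L < c * 2 ^ D0).
    { apply Rmult_lt_compat_r with (r := c) in HD0; auto. unfold Rdiv in HD0.
      rewrite Rmult_assoc, Rinv_l in HD0; lra. }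
    nra. }
  assert (Hj : exists j, Sp Delta j = BM).
  { apply NNPP. intros Hno. apply (Far 1%nat ltac:(lia)). intros i _.
    pose proof (HS i). destruct (Req_dec (Sp Delta i) BM). exfalso; apply Hno; eauto. lra. }
  destruct Hj as [j Hj]. exists j. intros ii Hii. apply NNPP. intros Hne.
  destruct (min_nat (fun i => (j < i)%nat /\ Delta i <> 0) ii (conj Hii Hne)) as [i0 [[Hji0 Hi0] Hmin]].
  assert (Hconst : forall d, (j + d < i0)%nat -> Sp Delta (j + d) = BM).
  { induction d; intros Hd'. rewrite Nat.add_0_r; auto.
    replace (j + S d)%nat with (S (j + d)) by lia. simpl. rewrite IHd by lia.
    assert (Delta (S (j + d)) = 0).
    { apply NNPP. intros Hn. apply (Hmin (S (j + d))). lia. split; auto. lia. }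
    lra. }
  assert (Hprev : Sp Delta (i0 - 1) = BM).
  { replace (i0 - 1)%nat with (j + (i0 - 1 - j))%nat by lia. apply Hconst. lia. }
  destruct (Hd i0 ltac:(lia)) as [Di0 Di0r].
  assert (Hneg : Delta i0 < 0).
  { pose proof (HS i0). rewrite Hprev in Di0. destruct (Rtotal_order (Delta i0) 0) as [|[|]]; try lra. }
  assert (Hlt0 : Sp Delta i0 < BM) by lra.
  assert (Hr : exists r, (i0 <= r)%nat /\ Sp Delta r = BM).
  { apply NNPP. intros Hno. apply (Far i0 ltac:(lia)). intros i1 Hi1.
    pose proof (HS i1). destruct (Req_dec (Sp Delta i1) BM). exfalso; apply Hno. exists i1; split; auto; lia. lra. }
  destruct Hr as [r0 Hr0].
  destruct (min_nat (fun r => (i0 <= r)%nat /\ Sp Delta r = BM) r0 Hr0) as [r [[Hi0r Hr] Hrmin]].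
  assert (Hi0r' : (i0 < r)%nat).
  { destruct (Nat.eq_dec i0 r); [subst; lra | lia]. }
  assert (Hbelow : forall i, (i0 <= i < r)%nat -> Sp Delta i < BM).
  { intros i Hi. pose proof (HS i). destruct (Req_dec (Sp Delta i) BM).
    exfalso. apply (Hrmin i); [lia | split; auto; lia]. lra. }
  destruct (Hd r ltac:(lia)) as [Dr Drr].
  assert (Hpos : 0 < Delta r). { pose proof (Hbelow (r - 1)%nat ltac:(lia)). lra. }
  destruct (fin_min (fun i => BM - Sp Delta i) i0 r) as [e0 [He0 Hie]].
  { intros i Hi. pose proof (Hbelow i Hi). lra. }
  set (eps := Rmin e0 (Rmin (- Delta i0) (Delta r))).
  assert (Heps : 0 < eps) by (apply Rmin_pos; [lra| apply Rmin_pos; lra]).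
  assert (He1 : eps <= - Delta i0) by (eapply Rle_trans; [apply Rmin_r | apply Rmin_l]).
  assert (He2 : eps <= Delta r) by (eapply Rle_trans; [apply Rmin_r | apply Rmin_r]).
  assert (Hie' : forall i, (i0 <= i < r)%nat -> Sp Delta i + eps <= BM).
  { intros i Hi. pose proof (Hie i Hi). pose proof (Rmin_l e0 (Rmin (- Delta i0) (Delta r))). fold eps in H0. simpl in H. lra. }
  pose proof (Hpert i0 r eps ltac:(lia) Hi0r' Heps Hie') as P.
  destruct (Gk_mvt K (mu0 + Delta i0) (mu0 + Delta i0 + eps) ltac:(lra)) as [x1 [Hx1 E1]].
  destruct (Gk_mvt K (mu0 + Delta r - eps) (mu0 + Delta r) ltac:(lra)) as [x2 [Hx2 E2]].
  assert (P1 : pk K mu0 <= pk K x1) by (apply F5; unfold mu0 in *; lra).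
  assert (P2 : pk K x2 <= pk K mu0) by (apply Pdec; lra).
  replace (Gk K (mu0 + Delta i0 + eps) - Gk K (mu0 + Delta i0)) with (- pk K x1 * eps) in P by (rewrite E1; ring).
  replace (Gk K (mu0 + Delta r - eps) - Gk K (mu0 + Delta r)) with (pk K x2 * eps) in P
    by (replace (Gk K (mu0 + Delta r - eps) - Gk K (mu0 + Delta r)) with (- (Gk K (mu0 + Delta r) - Gk K (mu0 + Delta r - eps))) by ring; rewrite E2; ring).
  assert (Hw : / 2 ^ r < / 2 ^ i0).
  { apply Rinv_lt_contravar. apply Rmult_lt_0_compat; apply pow_lt; lra. apply Rlt_pow; lra || lia. }
  assert (Hwr : 0 < / 2 ^ r) by (apply Rinv_0_lt_compat, pow_lt; lra).
  assert (/ 2 ^ r * (pk K x2 * eps) <= / 2 ^ r * (pk K mu0 * eps)) by (apply Rmult_le_compat_l; nra).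
  assert (/ 2 ^ i0 * (pk K mu0 * eps) <= / 2 ^ i0 * (pk K x1 * eps)) by (apply Rmult_le_compat_l; nra).
  assert (/ 2 ^ r * (pk K mu0 * eps) < / 2 ^ i0 * (pk K mu0 * eps)) by (apply Rmult_lt_compat_r; nra).
  lra.
Qed.
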